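(* Let $\mathcal{T}$ be an MPQ-tree of an interval graph $G=(V,E)$, let $(x,y)\in E$ with $x$ over $y$ and $node(x)\neq node(y)$. If $node(y)$ is a Q-node, then $(x,y)$ is not an interval edge.
   Context: Graphs are finite and simple; for $G=(V,E)$ and $e\in E$, $G-e=(V,E\setminus\{e\})$. An edge $(x,y)\in E$ of an interval graph $G$ is an interval edge if $G-(x,y)$ is an interval graph. An MPQ-tree of an interval graph $G=(V,E)$, $V=\{1,\dots,n\}$, is a rooted plane tree whose nodes are P-nodes and Q-nodes. Each P-node carries a (possibly empty) set of vertices. A Q-node has $k\ge 3$ ordered positions $1,\dots,k$; position $i$ carries a set $S_i\subseteq V$ (the $i$-th section) and a child subtree $T_i$, which may be empty. Every vertex $v$ is assigned to exactly one node $node(v)$: either $v$ lies in the set of the P-node $node(v)$, or $node(v)$ is a Q-node and $v$ lies exactly in the sections $S_{l(v)},\dots,S_{r(v)}$ of it, with $l(v)<r(v)$. For a node with child subtrees $T_1,\dots,T_k$, $V_i$ denotes the set of vertices assigned to nodes of $T_i$ ($V_i=\emptyset$ if $T_i$ is empty). The maximal cliques of $G$ are in bijection with the descending paths from the root which at a P-node continue into one of its children (stopping if there is none) and at a Q-node choose a position $i$ and continue into $T_i$ (stopping if $T_i$ is empty); the clique is the union of the sets of the visited P-nodes and the chosen sections. Reading these cliques left to right gives a linear order of the maximal cliques, and the orders obtained this way after arbitrarily permuting children of P-nodes and reversing the positions of Q-nodes are exactly the orders of the maximal cliques of $G$ in which the cliques containing any fixed vertex are consecutive. Moreover, for every Q-node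 with sections $S_1,\dots,S_k$: (a) $V_1\neq\emptyset$ and $V_k\ne\emptyset$; (b) $S_1\subseteq S_2$ and $S_k\subseteq S_{k-1}$; (c) $S_{i-1}\cap S_i\neq\emptyset$ for $2\le i\le k$; (d) $S_{i-1}\neq S_i$ for $2\le i\le k$; (e) $(S_i\cap S_{i+1})\setminus S_1\neq\emptyset$ and $(S_{i-1}\cap S_i)\setminus S_k\neq\emptyset$ for $2\le i\le k-1$; (f) $(S_{i-1}\cup V_{i-1})\setminus S_i\neq\emptyset$ and $(S_i\cup V_i)\setminus S_{i-1}\neq\emptyset$ for $2\le i\le k$; and further (g) no empty P-node has an empty P-node as its parent, (h) no P-node has exactly one child whose root is a P-node, (i) every child subtree of a P-node is nonempty. We say $x$ is over $y$ if $node(x)$ is the lowest common ancestor of $node(x)$ and $node(y)$ in $\mathcal{T}$. *)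

(* Defs.v *)
From HB Require Import structures.
From Stdlib Require Lists.List Sorting.Permutation.
From mathcomp Require Import all_boot.

Set Implicit Arguments.
Unset Strict Implicit.
Unset Printing Implicit Defensive.

Definition simple_graph (T : finType) (e : rel T) : Prop :=
  symmetric e /\ irreflexive e.

Definition remove_edge (T : finType) (e : rel T) (x y : T) : rel T :=
  fun u v => e u v && ~~ (((u == x) && (v == y)) || ((u == y) && (v == x))).

(* Interval graph: vertices get closed intervals [l v, r v] (finite graphs:
   integer endpoints suffice), adjacent distinct vertices = intersecting. *)
Definition interval_graph (T : finType) (e : rel T) : Prop :=
  exists I : T -> nat * nat,
    (forall v, (I v).1 <= (I v).2) /\
    (forall u v, u != v ->
       (e u v <-> ((I u).1 <= (I v).2) && ((I v).1 <= (I u).2))).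

Definition clique (T : finType) (e : rel T) (C : {set T}) : bool :=
  [forall u in C, forall v in C, (u != v) ==> e u v].

Definition max_clique (T : finType) (e : rel T) (C : {set T}) : bool :=
  maxset (clique e) C.

(* A Q-node carries the list of its positions; position i carries the
   section S_i and an optional (possibly empty) child subtree T_i. *)
Inductive mpq (T : finType) : Type :=
| PNode : {set T} -> seq (mpq T) -> mpq T
| QNode : seq ({set T} * option (mpq T)) -> mpq T.

Arguments PNode {T}.
Arguments QNode {T}.

Section MPQ.
Variable T : finType.

Fixpoint verts (t : mpq T) : {set T} :=
  match t with
  | PNode X ch => X :|: foldr (fun c A => verts c :|: A) set0 ch
  | QNode pos => foldr (fun p A =>
                   p.1 :|: (if p.2 is Some c then verts c else set0) :|: A)
                   set0 pos
  end.

Definition optverts (oc : option (mpq T)) : {set T} :=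
  if oc is Some c then verts c else set0.

Fixpoint subtrees (t : mpq T) : seq (mpq T) :=
  t :: match t with
       | PNode _ ch => flatten (map subtrees ch)
       | QNode pos => flatten (map (fun p =>
                        if p.2 is Some c then subtrees c else [::]) pos)
       end.

(* node addresses: a list of child indices (for a Q-node, the index is the
   position whose child subtree is entered) *)
Fixpoint subtree_at (t : mpq T) (a : seq nat) : option (mpq T) :=
  match a with
  | [::] => Some t
  | i :: a' =>
      match t with
      | PNode _ ch => if onth ch i is Some c then subtree_at c a' else None
      | QNode pos => if onth pos i is Some (_, Some c) then subtree_at c a'
                     else None
      end
  end.

Definition occurs_at (t : mpq T) (v : T) (a : seq nat) : Prop :=
  match subtree_at t a with
  | Some (PNode X _) => v \in X
  | Some (QNode pos) => has (fun p : {set T} * option (mpq T) => v \in p.1) pos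
  | None => False
  end.

Definition assigned (t : mpq T) (v : T) (a : seq nat) : Prop := occurs_at t v a.

Definition assignment_ok (t : mpq T) : Prop :=
  forall v : T,
    (exists a, assigned t v a /\ forall b, assigned t v b -> b = a) /\
    (forall a pos, assigned t v a -> subtree_at t a = Some (QNode pos) ->
       exists l r, [/\ l < r, r < size pos &
         forall i, i < size pos ->
           (v \in (nth (set0, None) pos i).1) = (l <= i <= r)]).

Fixpoint cliques (t : mpq T) : seq {set T} :=
  match t with
  | PNode X ch =>
      if ch is [::] then [:: X]
      else flatten (map (fun c => map (setU X) (cliques c)) ch)
  | QNode pos =>
      flatten (map (fun p => match p.2 with
                             | None => [:: p.1]
                             | Some c => map (setU p.1) (cliques c)
                             end) pos)
  end.

Inductive tequiv : mpq T -> mpq T -> Prop :=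
| tequivP X ch ch1 ch2 :
    List.Forall2 tequiv ch ch1 -> Permutation.Permutation ch1 ch2 ->
    tequiv (PNode X ch) (PNode X ch2)
| tequivQ pos pos' :
    List.Forall2 pequiv pos pos' -> tequiv (QNode pos) (QNode pos')
| tequivQrev pos pos' :
    List.Forall2 pequiv pos pos' -> tequiv (QNode pos) (QNode (rev pos'))
with pequiv : {set T} * option (mpq T) -> {set T} * option (mpq T) -> Prop :=
| pequivN X : pequiv (X, None) (X, None)
| pequivS X c c' : tequiv c c' -> pequiv (X, Some c) (X, Some c').

Definition consecutive (s : seq {set T}) : Prop :=
  forall (v : T) i j k, i <= j -> j <= k -> k < size s ->
    v \in nth set0 s i -> v \in nth set0 s k -> v \in nth set0 s j.

Definition sec (pos : seq ({set T} * option (mpq T))) i : {set T} :=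
  (nth (set0, None) pos i).1.
Definition Vpos (pos : seq ({set T} * option (mpq T))) i : {set T} :=
  optverts (nth (set0, None) pos i).2.

(* local conditions (a)-(h) (0-based indices; k = size pos) *)
Definition node_ok (u : mpq T) : Prop :=
  match u with
  | QNode pos =>
      let k := size pos in
      [/\ 3 <= k,
       Vpos pos 0 != set0 /\ Vpos pos k.-1 != set0,
       sec pos 0 \subset sec pos 1 /\ sec pos k.-1 \subset sec pos k.-2,
       (forall i, 1 <= i < k ->
          [/\ sec pos i.-1 :&: sec pos i != set0,
              sec pos i.-1 != sec pos i,
              (sec pos i.-1 :|: Vpos pos i.-1) :\: sec pos i != set0 &
              (sec pos i :|: Vpos pos i) :\: sec pos i.-1 != set0]) &
       (forall i, 1 <= i -> i <= k - 2 ->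
          ((sec pos i :&: sec pos i.+1) :\: sec pos 0 != set0) /\
          ((sec pos i.-1 :&: sec pos i) :\: sec pos k.-1 != set0))]
  | PNode X ch =>
      (X = set0 -> forall c, List.In c ch -> forall X' ch', c <> PNode X' ch' \/ X' != set0)
      /\
      (forall X' ch', ch <> [:: PNode X' ch'])
      (* (i) holds by construction: P-node children are (nonempty) trees *)
  end.

End MPQ.

Definition is_MPQ_tree (T : finType) (e : rel T) (t : mpq T) : Prop :=
  [/\ assignment_ok t,
      (* maximal cliques are in bijection with descending paths *)
      uniq (cliques t) /\ (forall C, (C \in cliques t) = max_clique e C),
      (forall s : seq {set T},
         (exists t', tequiv t t' /\ cliques t' = s) <->
         [/\ uniq s, (forall C, (C \in s) = max_clique e C) & consecutive s]) &
      (forall u, List.In u (subtrees t) -> node_ok u)].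

(* x is over y: node(x) is the lowest common ancestor of node(x) and node(y),
   i.e. the address of node(x) is a prefix of that of node(y). *)
Definition is_over (T : finType) (t : mpq T) (x y : T) : Prop :=
  exists ax ay, [/\ assigned t x ax, assigned t y ay & prefix ax ay].

Definition interval_edge (T : finType) (e : rel T) (x y : T) : Prop :=
  e x y /\ interval_graph (remove_edge e x y).

(* Main.v *)
Require Import Defs.
From HB Require Import structures.
From mathcomp Require Import all_boot.
From mathcomp Require Import zify.
Set Implicit Arguments.
Unset Strict Implicit.
Unset Printing Implicit Defensive.

Section S.
Variable T : finType.
Notation path_t := (seq nat * {set T})%type.

Definition mpq_ind' (P : mpq T -> Prop)
  (HP : forall X ch, (forall c, List.In c ch -> P c) -> P (PNode X ch))
  (HQ : forall pos, (forall Sx c, List.In (Sx, Some c) pos -> P c) -> P (QNode pos)) :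
  forall t, P t :=
  fix IH t := match t with
  | PNode X ch => HP X ch ((fix IHl (ch : seq (mpq T)) : forall c, List.In c ch -> P c :=
       match ch with
       | [::] => fun c H => match H with end
       | c' :: ch' => fun c H => match H with
           | or_introl E => eq_ind c' P (IH c') c E
           | or_intror H' => IHl ch' c H' end end) ch)
  | QNode pos => HQ pos ((fix IHl (pos : seq ({set T} * option (mpq T))) :
         forall Sx c, List.In (Sx, Some c) pos -> P c :=
       match pos with
       | [::] => fun Sx c H => match H with end
       | p' :: pos' => fun Sx c H => match H with
           | or_introl E => match p' as p0 return p0 = (Sx, Some c) -> P c with
               | (_, Some c') => fun E' => eq_ind c' P (IH c') c (f_equal (fun q => if q.2 is Some d then d else c') E')
               | (_, None) => fun E' => match E' with end
               end E
           | or_intror H' => IHl pos' Sx c H' end end) pos)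
  end.

Definition goP (f : mpq T -> seq path_t) (X : {set T}) :=
  fix go (i : nat) (ch : seq (mpq T)) : seq path_t := match ch with
  | [::] => [::]
  | c :: ch' => [seq (i :: pq.1, X :|: pq.2) | pq <- f c] ++ go i.+1 ch' end.

Definition goQ (f : mpq T -> seq path_t) :=
  fix go (i : nat) (pos : seq ({set T} * option (mpq T))) : seq path_t := match pos with
  | [::] => [::]
  | (Sx, oc) :: pos' => match oc with
       | None => [:: ([:: i], Sx)]
       | Some c => [seq (i :: pq.1, Sx :|: pq.2) | pq <- f c] end ++ go i.+1 pos' end.

Fixpoint cpaths (t : mpq T) : seq path_t :=
  match t with
  | PNode X ch => if ch is [::] then [:: ([::], X)] else goP cpaths X 0 ch
  | QNode pos => goQ cpaths 0 pos
  end.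

Lemma goP_mem f X i ch p C :
  (p, C) \in goP f X i ch <-> exists j c q C',
    [/\ onth ch j = Some c, p = (i + j) :: q, C = X :|: C' & (q, C') \in f c].
Proof.
elim: ch i p C => [|c ch IH] i p C /=.
  by split; [rewrite in_nil | case=> [j [c [q [C' [/=]]]]]; rewrite onth0n].
rewrite mem_cat; split.
  case/orP => [/mapP [[q C'] H [-> ->]] | /IH [j [c' [q [C' [H1 H2 H3 H4]]]]]].
    by exists 0, c, q, C'; rewrite addn0.
  by exists j.+1, c', q, C'; rewrite -addSnnS.
case=> j [c' [q [C' [Ho -> -> Hm]]]].
case: j Ho => [|j] /= Ho.
  case: Ho => E; subst c'; apply/orP; left; apply/mapP; exists (q, C') => //.
  by rewrite addn0.
apply/orP; right; apply/IH; exists j, c', q, C'; split => //.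
by rewrite addSnnS.
Qed.

Lemma goQ_mem f i pos p C :
  (p, C) \in goQ f i pos <-> exists j Sx oc, onth pos j = Some (Sx, oc) /\
    match oc with
    | None => p = [:: i + j] /\ C = Sx
    | Some c => exists q C', [/\ p = (i + j) :: q, C = Sx :|: C' & (q, C') \in f c]
    end.
Proof.
elim: pos i p C => [|[Sx oc] pos IH] i p C /=.
  by split; [rewrite in_nil | case=> [j [Sx [oc [/=]]]]; rewrite onth0n].
rewrite mem_cat; split.
  case/orP => [H | /IH [j [Sx' [oc' [H1 H2]]]]].
    exists 0, Sx, oc; split => //; case: oc H => [c|].
      by case/mapP => [[q C'] H [-> ->]]; exists q, C'; rewrite addn0.
    by rewrite inE => /eqP [-> ->]; rewrite addn0.
  by exists j.+1, Sx', oc'; split => //; rewrite -addSnnS.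
case=> j [Sx' [oc' [Ho H]]].
case: j Ho H => [|j] /= Ho H.
  case: Ho => <- <- in H *; apply/orP; left; case: oc H => [c|].
    by case=> [q [C' [-> -> Hm]]]; apply/mapP; exists (q, C') => //; rewrite addn0.
  by case=> [-> ->]; rewrite addn0 inE.
apply/orP; right; apply/IH; exists j, Sx', oc'; split => //.
case: oc' Ho H => [c|] Ho; last by case=> [-> ->]; rewrite addSnnS.
by case=> [q [C' [-> -> Hm]]]; exists q, C'; rewrite addSnnS.
Qed.

Lemma map_snd_step (i : nat) (Y : {set T}) (l : seq path_t) :
  map snd [seq (i :: pq.1, Y :|: pq.2) | pq <- l] = map (setU Y) (map snd l).
Proof. by rewrite -!map_comp. Qed.

Lemma cpaths_cliques t : map snd (cpaths t) = cliques t.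
Proof.
elim/mpq_ind': t => [X ch IH|pos IH] /=.
  case: ch IH => [//|c ch] IH.
  suff H : forall ch', (forall c, List.In c ch' -> map snd (cpaths c) = cliques c) ->
     forall i, map snd (goP cpaths X i ch') =
     flatten (map (fun c => map (setU X) (cliques c)) ch') by apply: H.
  elim=> [//|c' ch' IHl] IH' i /=.
  rewrite map_cat IHl; last by move=> d Hd; apply: IH'; right.
  by rewrite map_snd_step IH' //; left.
suff H : forall pos', (forall Sx c, List.In (Sx, Some c) pos' -> map snd (cpaths c) = cliques c) ->
  forall i, map snd (goQ cpaths i pos') =
  flatten (map (fun p => match p.2 with
                             | None => [:: p.1]
                             | Some c => map (setU p.1) (cliques c)
                             end) pos') by apply: H.
elim=> [//|[Sx oc] pos' IHl] IH' i /=.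
rewrite map_cat IHl; last by move=> Sy d Hd; apply: (IH' Sy); right.
case: oc IH' => [c|] IH' //=.
by rewrite map_snd_step (IH' Sx) //; left.
Qed.


Lemma onth_In (A : Type) (s : seq A) j x : onth s j = Some x -> List.In x s.
Proof.
elim: s j => [|y s IH] [|j] //=; first by case=> ->; left.
by move/IH; right.
Qed.

Lemma In_cat (A : Type) (x : A) s1 s2 : List.In x (s1 ++ s2) <-> List.In x s1 \/ List.In x s2.
Proof.
elim: s1 => [|y s1 IH] /=; first by split; [right | case].
by rewrite IH; tauto.
Qed.

Lemma subtree_at_cat t a b :
  subtree_at t (a ++ b) = if subtree_at t a is Some u then subtree_at u b else (None : option (mpq T)).
Proof.
elim: a t => [//|i a IH] [X ch|pos] /=.
  by case: (onth ch i) => [c|] //.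
by case: (onth pos i) => [[Sx [c|]]|].
Qed.

Definition qsec (t : mpq T) (a p : seq nat) (v : T) : Prop :=
  forall pos, subtree_at t a = Some (QNode pos) -> v \in sec pos (nth 0 p (size a)).

Lemma cpaths_occurs t p C v : (p, C) \in cpaths t -> v \in C ->
  exists a, [/\ prefix a p, occurs_at t v a & qsec t a p v].
Proof.
elim/mpq_ind': t p C v => [X ch IH|pos IH] p C v.
  case: ch IH => [|c0 ch0] IH.
    rewrite /= inE => /eqP [-> ->] Hv; exists [::]; split => //; by [| move=> pos' []].
  move/goP_mem => [j [c [q [C' [Ho -> -> Hm]]]]].
  rewrite inE => /orP [Hv|Hv].
    by exists [::]; split => //; by [| move=> pos' []].
  have [a' [Hp Ho' Hq]] := IH c (onth_In Ho) _ _ _ Hm Hv.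
  exists (j :: a'); split.
  - by rewrite /= eqxx.
  - by rewrite /occurs_at /= Ho.
  - by move=> pos; rewrite /= Ho => /Hq.
move/goQ_mem => [j [Sx [oc [Ho H]]]].
have Hsec : sec pos j = Sx by rewrite /sec (onth_nth (set0, None) _ _ _ Ho).
have Hhas : forall w, w \in Sx -> occurs_at (QNode pos) w [::].
  move=> w Hw; rewrite /occurs_at /=; apply/(has_nthP (set0, None)); exists j.
    by rewrite -onthTE Ho.
  by rewrite (onth_nth (set0, None) _ _ _ Ho).
case: oc Ho H => [c|] Ho.
  case=> [q [C' [-> -> Hm]]]; rewrite inE => /orP [Hv|Hv].
    exists [::]; split => //; first by apply: Hhas.
    by move=> pos' [<-]; rewrite /= Hsec.
  have [a' [Hp Ho' Hq]] := IH Sx c (onth_In Ho) _ _ _ Hm Hv.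
  exists (j :: a'); split.
  - by rewrite /= eqxx.
  - by rewrite /occurs_at /= Ho.
  - by move=> pos'; rewrite /= Ho => /Hq.
case=> [-> ->] Hv; exists [::]; split => //; first by apply: Hhas.
by move=> pos' [<-]; rewrite /= Hsec.
Qed.


Lemma occurs_cpaths t p C a v : (p, C) \in cpaths t -> prefix a p ->
  occurs_at t v a -> qsec t a p v -> v \in C.
Proof.
elim/mpq_ind': t p C a v => [X ch IH|pos IH] p C a v.
  case: ch IH => [|c0 ch0] IH.
    rewrite /= inE => /eqP [-> ->]; rewrite prefixs0 => /eqP ->.
    by rewrite /occurs_at /=.
  move/goP_mem => [j [c [q [C' [Ho -> -> Hm]]]]].
  case: a => [|i a] /=.
    by move=> _; rewrite /occurs_at /= => Hv _; rewrite inE Hv.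
  case/andP => /eqP -> Hp; rewrite /occurs_at /= Ho => Ho' Hq.
  rewrite inE (IH c (onth_In Ho) _ _ _ _ Hm Hp Ho') ?orbT //.
  by move=> pos; move: (Hq pos); rewrite /= Ho.
move/goQ_mem => [j [Sx [oc [Ho H]]]].
have Hsec : sec pos j = Sx by rewrite /sec (onth_nth (set0, None) _ _ _ Ho).
case: a => [|i a].
  move=> _ _ /(_ pos erefl) /=.
  case: oc Ho H => [c|] Ho.
    by case=> [q [C' [-> -> Hm]]]; rewrite /= Hsec inE => ->.
  by case=> [-> ->]; rewrite /= Hsec.
case: oc Ho H => [c|] Ho; last first.
  case=> [-> ->]; rewrite prefix_cons prefixs0 => /andP [/eqP -> /eqP ->].
  by rewrite /occurs_at /= Ho.
case=> [q [C' [-> -> Hm]]] /andP [/eqP -> Hp]; rewrite /occurs_at /= Ho => Ho' Hq.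
rewrite inE (IH Sx c (onth_In Ho) _ _ _ _ Hm Hp Ho') ?orbT //.
by move=> pos'; move: (Hq pos'); rewrite /= Ho.
Qed.


Lemma cpathsP_intro X ch j c q C :
  onth ch j = Some c -> (q, C) \in cpaths c -> (j :: q, X :|: C) \in cpaths (PNode X ch).
Proof.
case: ch => [|c0 ch0]; first by rewrite onth0n.
move=> Ho Hm; apply/goP_mem; by exists j, c, q, C.
Qed.

Lemma cpathsQS_intro pos j Sx c q C :
  onth pos j = Some (Sx, Some c) -> (q, C) \in cpaths c ->
  (j :: q, Sx :|: C) \in cpaths (QNode pos).
Proof. move=> Ho Hm; apply/goQ_mem; exists j, Sx, (Some c); split => //; by exists q, C. Qed.

Lemma cpathsQN_intro pos j Sx :
  onth pos j = Some (Sx, None) -> ([:: j], Sx) \in cpaths (QNode pos).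
Proof. move=> Ho; apply/goQ_mem; exists j, Sx, None; by split. Qed.

Lemma cpaths_extend t a u q C' : subtree_at t a = Some u -> (q, C') \in cpaths u ->
  exists C, (a ++ q, C) \in cpaths t /\ C' \subset C.
Proof.
elim: a t => [|i a IH] t /=; first by move=> [->] Hm; exists C'.
case: t => [X ch|pos].
  case Ho: (onth ch i) => [c|] // Hs Hm.
  have [C1 [H1 H2]] := IH c Hs Hm.
  exists (X :|: C1); split; first exact: cpathsP_intro Ho H1.
  by apply: subset_trans H2 _; apply: subsetUr.
case Ho: (onth pos i) => [[Sx [c|]]|] // Hs Hm.
have [C1 [H1 H2]] := IH c Hs Hm.
exists (Sx :|: C1); split; first exact: cpathsQS_intro Ho H1.
by apply: subset_trans H2 _; apply: subsetUr.
Qed.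

Definition allok (u : mpq T) := forall w, List.In w (subtrees u) -> node_ok w.

Lemma In_flatten_map (A B : Type) (f : A -> seq B) s c w :
  List.In c s -> List.In w (f c) -> List.In w (flatten (map f s)).
Proof.
elim: s => [//|d s IH] /= [-> H|H H']; apply/In_cat; [by left | by right; apply: IH].
Qed.

Lemma allokP X ch c : allok (PNode X ch) -> List.In c ch -> allok c.
Proof.
move=> H Hc w Hw; apply: H; right; exact: (In_flatten_map Hc Hw).
Qed.

Lemma allokQ pos Sx c : allok (QNode pos) -> List.In (Sx, Some c) pos -> allok c.
Proof.
move=> H Hc w Hw; apply: H; right.
exact: (In_flatten_map (f := fun p : {set T} * option (mpq T) =>
   if p.2 is Some c then subtrees c else [::]) Hc Hw).
Qed.

Lemma cpaths_ne u : allok u -> exists q C, (q, C) \in cpaths u.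
Proof.
elim/mpq_ind': u => [X ch IH|pos IH] Hok.
  case: ch IH Hok => [|c0 ch0] IH Hok; first by exists [::], X; rewrite inE.
  have [q [C Hm]] := IH c0 (or_introl erefl) (allokP Hok (or_introl erefl)).
  exists (0 :: q), (X :|: C); exact: cpathsP_intro Hm.
have := Hok _ (or_introl erefl); rewrite /node_ok => -[H3 _ _ _ _].
case: pos IH Hok H3 => [//|[Sx [c|]] pos] IH Hok _.
  have Hin : List.In (Sx, Some c) ((Sx, Some c) :: pos) by left.
  have [q [C Hm]] := IH Sx c Hin (allokQ Hok Hin).
  exists (0 :: q), (Sx :|: C); exact: cpathsQS_intro Hm.
by exists [:: 0], Sx; apply: cpathsQN_intro.
Qed.

Lemma vertsP (X : {set T}) (ch : seq (mpq T)) (v : T) : v \in verts (PNode X ch) ->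
  v \in X \/ exists j c, onth ch j = Some c /\ v \in verts c.
Proof.
elim: ch => [|c ch IH] /=; first by rewrite inE in_set0 orbF; left.
rewrite !inE => /or3P [H|H|H]; first by left.
  by right; exists 0, c.
case: IH; first by rewrite inE H orbT.
  by left.
by move=> [j [d [H1 H2]]]; right; exists j.+1, d.
Qed.

Lemma vertsQ (pos : seq ({set T} * option (mpq T))) (v : T) : v \in verts (QNode pos) ->
  exists j Sx oc, onth pos j = Some (Sx, oc) /\
    (v \in Sx \/ exists c, oc = Some c /\ v \in verts c).
Proof.
elim: pos => [|[Sx oc] pos IH] /=; first by rewrite in_set0.
rewrite !inE -orbA => /or3P [H|H|H].
- by exists 0, Sx, oc; split => //; left.
- case: oc H => [c|] H; last by rewrite in_set0 in H.
  by exists 0, Sx, (Some c); split => //; right; exists c.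
- by have [j [Sy [oc' [H1 H2]]]] := IH H; exists j.+1, Sy, oc'.
Qed.

Lemma verts_cpaths u v : allok u -> v \in verts u ->
  exists q C, (q, C) \in cpaths u /\ v \in C.
Proof.
elim/mpq_ind': u => [X ch IH|pos IH] Hok.
  case/vertsP => [Hv|[j [c [Ho Hv]]]].
    have [q [C Hm]] := cpaths_ne Hok.
    exists q, C; split => //; apply: (occurs_cpaths (a := [::]) Hm); [exact: prefix0s | exact: Hv | ].
    by move=> pos [].
  have [q [C [Hm HC]]] := IH c (onth_In Ho) (allokP Hok (onth_In Ho)) Hv.
  exists (j :: q), (X :|: C); split; first exact: cpathsP_intro Ho Hm.
  by rewrite inE HC orbT.
case/vertsQ => [j [Sx [oc [Ho [Hv|[c [Ec Hv]]]]]]].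
  case: oc Ho => [c|] Ho.
    have Hin := onth_In Ho.
    have [q [C Hm]] := cpaths_ne (allokQ Hok Hin).
    exists (j :: q), (Sx :|: C); split; first exact: cpathsQS_intro Ho Hm.
    by rewrite inE Hv.
  by exists [:: j], Sx; split => //; apply: cpathsQN_intro.
subst oc; have Hin := onth_In Ho.
have [q [C [Hm HC]]] := IH Sx c Hin (allokQ Hok Hin) Hv.
exists (j :: q), (Sx :|: C); split; first exact: cpathsQS_intro Ho Hm.
by rewrite inE HC orbT.
Qed.


Lemma subtree_at_sub (t : mpq T) a u : subtree_at t a = Some u ->
  forall w, List.In w (subtrees u) -> List.In w (subtrees t).
Proof.
elim: a t => [|i a IH] t /=; first by move=> [->].
case: t => [X ch|pos].
  case Ho: (onth ch i) => [c|] // Hs w Hw; right.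
  exact: (In_flatten_map (onth_In Ho) (IH c Hs w Hw)).
case Ho: (onth pos i) => [[Sx [c|]]|] // Hs w Hw; right.
exact: (In_flatten_map (f := fun p : {set T} * option (mpq T) =>
   if p.2 is Some c then subtrees c else [::]) (onth_In Ho) (IH c Hs w Hw)).
Qed.

Lemma subtree_at_allok (t : mpq T) a u : allok t -> subtree_at t a = Some u -> allok u.
Proof. by move=> H Hs w Hw; apply: H; exact: subtree_at_sub Hs w Hw. Qed.

Lemma prefix_size (s1 s2 : seq nat) : prefix s1 s2 -> size s1 <= size s2.
Proof. by case/prefixP => s ->; rewrite size_cat leq_addr. Qed.

Lemma prefix_nth (s1 s2 : seq nat) k : prefix s1 s2 -> k < size s1 -> nth 0 s2 k = nth 0 s1 k.
Proof. by case/prefixP => s -> Hk; rewrite nth_cat Hk. Qed.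

Lemma prefix_antisym (s1 s2 : seq nat) : prefix s1 s2 -> prefix s2 s1 -> s1 = s2.
Proof.
move=> H1 H2; have := prefix_size H1; have := prefix_size H2.
case/prefixP: H1 => s E; rewrite E size_cat => H _.
move: H; rewrite -{2}(addn0 (size s1)) leq_add2l leqn0 => /eqP H.
by move/size0nil: H => Es; rewrite Es cats0.
Qed.

End S.

Lemma no_C4 (T : finType) (f : rel T) x a y b : interval_graph f ->
  x != a -> a != y -> y != b -> b != x -> x != y -> a != b ->
  f x a -> f a y -> f y b -> f b x -> ~~ f x y -> ~~ f a b -> False.
Proof.
move=> [I [Hle HI]] n1 n2 n3 n4 n5 n6 F1 F2 F3 F4 F5 F6.
move: ((HI _ _ n1).1 F1) ((HI _ _ n2).1 F2) ((HI _ _ n3).1 F3) ((HI _ _ n4).1 F4).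
move=> /andP [A1 A2] /andP [A3 A4] /andP [A5 A6] /andP [A7 A8].
have N1 : ~~ (((I x).1 <= (I y).2) && ((I y).1 <= (I x).2)).
  by apply/negP => H; move/negP: F5; apply; apply/(HI _ _ n5).
have N2 : ~~ (((I a).1 <= (I b).2) && ((I b).1 <= (I a).2)).
  by apply/negP => H; move/negP: F6; apply; apply/(HI _ _ n6).
move: N1 N2; rewrite !negb_and -!ltnNge.
move: A1 A2 A3 A4 A5 A6 A7 A8.
move: (I x).1 (I x).2 (I a).1 (I a).2 (I y).1 (I y).2 (I b).1 (I b).2.
clear; move=> x1 x2 a1 a2 y1 y2 b1 b2 A1 A2 A3 A4 A5 A6 A7 A8.
case/orP => N1; case/orP => N2.
all: lia.
Qed.

Section M.
Variable T : finType.
Variable e : rel T.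
Variable t : mpq T.
Hypothesis Hsg : simple_graph e.
Hypothesis HT : is_MPQ_tree e t.

Lemma uniq_addr v a b : assigned t v a -> assigned t v b -> a = b.
Proof.
case: HT => Hass _ _ _; have [[c [_ Hc]] _] := Hass v.
by move=> /Hc -> /Hc ->.
Qed.

Lemma cliques_mem C : (C \in cliques t) = max_clique e C.
Proof. by case: HT => _ [_ H] _ _. Qed.

Lemma edge_clique u v : u != v -> e u v ->
  exists p C, [/\ (p, C) \in cpaths t, u \in C & v \in C].
Proof.
move=> Huv Euv.
have Hc : clique e [set u; v].
  case: Hsg => Hsym Hirr.
  apply/forallP => a; apply/implyP => Ha; apply/forallP => b; apply/implyP => Hb.
  apply/implyP => Hab; move: Ha Hb Hab; rewrite !inE.
  by case/orP => /eqP -> /orP [/eqP ->|/eqP ->]; rewrite ?eqxx // (Hsym v u).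
have [A HA Hsub] := maxset_exists Hc.
have : A \in cliques t by rewrite cliques_mem.
rewrite -cpaths_cliques => /mapP [[p C] Hm /= EA].
exists p, C; split => //; rewrite -EA; apply: (subsetP Hsub); rewrite !inE eqxx ?orbT //.
Qed.

Lemma clique_edge p C u v : (p, C) \in cpaths t -> u \in C -> v \in C -> u != v -> e u v.
Proof.
move=> Hm Hu Hv Huv.
have : C \in cliques t by rewrite -cpaths_cliques; apply/mapP; exists (p, C).
rewrite cliques_mem => /maxsetp /forallP /(_ u) /implyP /(_ Hu) /forallP /(_ v).
by move=> /implyP /(_ Hv) /implyP /(_ Huv).
Qed.


Lemma sec_size (pos : seq ({set T} * option (mpq T))) w i : w \in sec pos i -> i < size pos.
Proof.
rewrite /sec; case: (ltnP i (size pos)) => // H.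
by rewrite nth_default // in_set0.
Qed.

Lemma main_aux x y ax ay pos : e x y -> is_over t x y ->
  assigned t x ax -> assigned t y ay -> ax <> ay ->
  subtree_at t ay = Some (QNode pos) -> ~ interval_edge e x y.
Proof.
move=> Exy [ax' [ay' [Hx' Hy' Hp']]] Hx Hy Hne HQ [_ Hiv].
have Eax := uniq_addr Hx' Hx; have Eay := uniq_addr Hy' Hy; subst ax' ay'.
have Hass : assignment_ok t by case: HT.
have Hokt : allok t by case: HT.
have HokQ : allok (QNode pos) := subtree_at_allok Hokt HQ.
have [H3 _ _ Hcdf _] := HokQ _ (or_introl erefl).
have [ly [ry [Hlr Hrs Hyr]]] := (Hass y).2 ay pos Hy HQ.
have Hl1 : ly.+1 < size pos by apply: leq_ltn_trans Hrs.
have [_ _ Hf1 Hf2] := Hcdf ly.+1 Hl1.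
rewrite /= in Hf1 Hf2.
have Hyl : y \in sec pos ly by rewrite /sec Hyr ?leqnn ?(ltnW Hlr) // (ltn_trans _ Hl1).
have Hyl1 : y \in sec pos ly.+1 by rewrite /sec Hyr // Hlr andbT ltnW.
have nxy : x != y by apply/eqP => E; subst; case: Hsg => _ Hirr; rewrite Hirr in Exy.
have Hsz : size ax < size ay.
  rewrite ltn_neqAle prefix_size // andbT; apply/eqP => E; apply: Hne.
  by move: Hp'; rewrite prefixE E take_size => /eqP.
have Hxin : forall p C, (p, C) \in cpaths t -> prefix ay p -> x \in C.
  have [p0 [C0 [Hm0 Hx0 Hy0]]] := edge_clique nxy Exy.
  have [a1 [Hp1 Ho1 _]] := cpaths_occurs Hm0 Hy0.
  have Ea1 := uniq_addr Ho1 Hy; subst a1.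
  have [a2 [Hp2 Ho2 Hq2]] := cpaths_occurs Hm0 Hx0.
  have Ea2 := uniq_addr Ho2 Hx; subst a2.
  move=> p C Hm Hp; apply: (occurs_cpaths Hm _ Hx).
    exact: prefix_trans Hp' Hp.
  move=> pos' Hs; move: (Hq2 pos' Hs).
  by rewrite (prefix_nth Hp1 Hsz) (prefix_nth Hp Hsz).
have Hyin : forall q C m, (ay ++ m :: q, C) \in cpaths t -> y \in sec pos m -> y \in C.
  move=> q C m Hm Hym; apply: (occurs_cpaths Hm (prefix_prefix _ _) Hy).
  by move=> pos'; rewrite HQ => -[<-]; rewrite nth_cat ltnn subnn.
have Hex : forall w m, m < size pos -> w \in sec pos m :|: Vpos pos m ->
    exists q C, (ay ++ m :: q, C) \in cpaths t /\ w \in C.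
  move=> w m Hm; case Ho: (onth pos m) => [[Sm oc]|]; last first.
    by move: Hm; rewrite -onthTE Ho.
  have Esec : sec pos m = Sm by rewrite /sec (onth_nth (set0, None) _ _ _ Ho).
  have EV : Vpos pos m = optverts oc by rewrite /Vpos (onth_nth (set0, None) _ _ _ Ho).
  rewrite Esec EV inE => Hw.
  case: oc Ho Hw EV => [c|] Ho Hw EV.
    have Hin := onth_In Ho; have Hokc := allokQ HokQ Hin.
    have [q [C' [Hm' Hw']]] : exists q C', (q, C') \in cpaths c /\ (w \in Sm \/ w \in C').
      case/orP: Hw => Hw.
        by have [q [C' Hm']] := cpaths_ne Hokc; exists q, C'; split; [|left].
      by have [q [C' [Hm' H']]] := verts_cpaths Hokc Hw; exists q, C'; split; [|right].
    have [C [Hm2 HC]] := cpaths_extend HQ (cpathsQS_intro Ho Hm').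
    exists q, C; split => //; apply: (subsetP HC).
    by case: Hw' => H; rewrite inE H ?orbT.
  have [C [Hm2 HC]] := cpaths_extend HQ (cpathsQN_intro Ho).
  exists [::], C; split => //; apply: (subsetP HC).
  by move: Hw; rewrite /optverts in_set0 orbF.
have Haddr : forall w m, m < size pos -> w \in sec pos m :|: Vpos pos m ->
    exists al, [/\ assigned t w al, prefix ay al &
       (al = ay /\ w \in sec pos m) \/ (exists s, al = ay ++ m :: s)].
  move=> w m Hm; rewrite inE => /orP [Hw|Hw].
    exists ay; split; [| exact: prefix_refl | by left].
    rewrite /assigned /occurs_at HQ; apply/(has_nthP (set0, None)); by exists m.
  case Ho: (onth pos m) => [[Sm oc]|]; last by move: Hm; rewrite -onthTE Ho.
  have EV : Vpos pos m = optverts oc by rewrite /Vpos (onth_nth (set0, None) _ _ _ Ho).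
  case: oc Ho EV => [c|] Ho EV; last by rewrite EV /optverts in_set0 in Hw.
  rewrite EV /= in Hw.
  have Hokc := allokQ HokQ (onth_In Ho).
  have [q [C' [Hm' Hw']]] := verts_cpaths Hokc Hw.
  have [s [_ Hos _]] := cpaths_occurs Hm' Hw'.
  exists (ay ++ m :: s); split; [| exact: prefix_prefix | by right; exists s].
  by rewrite /assigned /occurs_at subtree_at_cat HQ /= Ho.
have Hpath : forall w m p C, m < size pos -> w \in sec pos m :|: Vpos pos m ->
    (p, C) \in cpaths t -> w \in C ->
    prefix ay p /\ (nth 0 p (size ay) = m \/
      [/\ assigned t w ay, w \in sec pos m & w \in sec pos (nth 0 p (size ay))]).
  move=> w m p C Hm Hw Hmc HwC.
  have [al [Hal Hpal Hcase]] := Haddr w m Hm Hw.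
  have [al' [Hpp Ho' Hq']] := cpaths_occurs Hmc HwC.
  have E := uniq_addr Ho' Hal; subst al'.
  case: Hcase => [[E Hwm]|[s E]]; subst al.
    split => //; right; split => //; exact: (Hq' pos HQ).
  split; first exact: (prefix_trans (prefix_prefix ay (m :: s)) Hpp).
  left; rewrite (prefix_nth Hpp); last by rewrite size_cat /= addnS ltnS leq_addr.
  by rewrite nth_cat ltnn subnn.
have Hconv : forall w i1 i2 i3, assigned t w ay -> i1 <= i3 <= i2 ->
    w \in sec pos i1 -> w \in sec pos i2 -> w \in sec pos i3.
  move=> w i1 i2 i3 Hw /andP [H13 H32] H1 H2.
  have Hs2 := sec_size H2.
  have [lw [rw [_ _ Hr]]] := (Hass w).2 ay pos Hw HQ.
  move: H1 H2; rewrite /sec !Hr //; last 2 first.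
  - exact: leq_ltn_trans H32 Hs2.
  - exact: leq_ltn_trans (leq_trans H13 H32) Hs2.
  move=> /andP [A1 A2] /andP [A3 A4]; apply/andP; split.
    exact: leq_trans A1 H13.
  exact: leq_trans H32 A4.
case/set0Pn: Hf1 => a; rewrite in_setD => /andP [Ha1 Ha2].
case/set0Pn: Hf2 => b; rewrite in_setD => /andP [Hb1 Hb2].
have Hboth : forall p C, (p, C) \in cpaths t -> a \in C -> b \in C -> False.
  move=> p C Hm HaC HbC.
  have [_ Pa] := Hpath a ly p C (ltnW Hl1) Ha2 Hm HaC.
  have [_ Pb] := Hpath b ly.+1 p C Hl1 Hb2 Hm HbC.
  move: Pa Pb; set j := nth 0 p (size ay).
  case=> [Ea|[Hasa Hal Haj]]; case=> [Eb|[Hasb Hbl Hbj]].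
  - by rewrite Ea in Eb; apply: (n_Sn ly).
  - by rewrite Ea in Hbj; rewrite Hbj in Hb1.
  - by rewrite Eb in Haj; rewrite Haj in Ha1.
  case: (leqP j ly) => Hj.
    have := Hconv b j ly.+1 ly Hasb; rewrite Hj leqnSn => /(_ isT Hbj Hbl).
    by rewrite (negbTE Hb1).
  have := Hconv a ly j ly.+1 Hasa; rewrite leqnSn Hj => /(_ isT Hal Haj).
  by rewrite (negbTE Ha1).
have [qa [Ca [Hma HaC]]] := Hex a ly (ltnW Hl1) Ha2.
have [qb [Cb [Hmb HbC]]] := Hex b ly.+1 Hl1 Hb2.
have HxCa := Hxin _ _ Hma (prefix_prefix _ _).
have HxCb := Hxin _ _ Hmb (prefix_prefix _ _).
have HyCa := Hyin _ _ _ Hma Hyl.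
have HyCb := Hyin _ _ _ Hmb Hyl1.
have nay : a != y by apply/eqP => E; rewrite E Hyl1 in Ha1.
have nby : b != y by apply/eqP => E; rewrite E Hyl in Hb1.
have nwx : forall w m, m < size pos -> w \in sec pos m :|: Vpos pos m -> w != x.
  move=> w m Hm Hw; apply/eqP => E.
  have [al [Hal Hpal _]] := Haddr w m Hm Hw.
  rewrite E in Hal; have E2 := uniq_addr Hal Hx; subst al.
  by move: (prefix_size Hpal); rewrite leqNgt Hsz.
have nax := nwx a ly (ltnW Hl1) Ha2.
have nbx := nwx b ly.+1 Hl1 Hb2.
have nab : a != b by apply/eqP => E; apply: (Hboth _ _ Hma HaC); rewrite -E.
have nxa : x != a by rewrite eq_sym.
have nyb : y != b by rewrite eq_sym.
have Exa := clique_edge Hma HxCa HaC nxa.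
have Eay := clique_edge Hma HaC HyCa nay.
have Eyb := clique_edge Hmb HyCb HbC nyb.
have Ebx := clique_edge Hmb HbC HxCb nbx.
have Nab : ~~ e a b.
  apply/negP => Eab; have [p [C [Hm H1 H2]]] := edge_clique nab Eab.
  exact: Hboth Hm H1 H2.
have nyx : (y == x) = false by rewrite eq_sym (negbTE nxy).
apply: (no_C4 Hiv (x := x) (a := a) (y := y) (b := b)).
- by rewrite eq_sym.
- exact: nay.
- by rewrite eq_sym.
- exact: nbx.
- exact: nxy.
- exact: nab.
- by rewrite /remove_edge Exa (negbTE nay) (negbTE nxy) !andbF.
- by rewrite /remove_edge Eay (negbTE nax) (negbTE nay).
- by rewrite /remove_edge Eyb nyx (negbTE nbx) !andbF.
- by rewrite /remove_edge Ebx (negbTE nbx) (negbTE nby).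
- by rewrite /remove_edge !eqxx andbF.
- by rewrite /remove_edge negb_and Nab.
Qed.

End M.

Unset Implicit Arguments.

Theorem mainTheorem9 (T : finType) (e : rel T) (t : mpq T) (x y : T)
  (ax ay : seq nat) :
  simple_graph e -> interval_graph e -> is_MPQ_tree e t ->
  e x y -> is_over t x y ->
  assigned t x ax -> assigned t y ay -> ax <> ay ->
  (exists pos, subtree_at t ay = Some (QNode pos)) ->
  ~ interval_edge e x y.
Proof.
move=> Hsg _ HT Exy Hov Hx Hy Hne [pos HQ].
exact: (main_aux Hsg HT Exy Hov Hx Hy Hne HQ).
Qed.
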